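(* Let $R>0$ and $q>0$ be fixed, and for $M\ge2$ let $\tau_M=\frac{R}{q\ln M}$. Define $$\mathcal{E}(\tau)=\mathbb{E}\left[\frac{e^{U_1/\sqrt{\tau}}}{e^{U_1/\sqrt\tau}+e^{-1/\tau}\sum_{j=2}^Me^{U_j/\sqrt\tau}}\right],$$ with $U_1,\dots,U_M$ i.i.d. $\mathcal{N}(0,1)$. Then $\lim_{M\to\infty}\mathcal{E}(\tau_M)=1$ if $q>2R$ and $\lim_{M\to\infty}\mathcal{E}(\tau_M)=0$ if $q<2R$. (In the spatially coupled state evolution, $q=\frac{1}{L_R}\sum_{r=1}^{L_R}W_{rc}/\phi^t_r$.)
   Context: In spatially coupled SPARC state evolution, $\tau^t_c=\frac{R}{\ln M}\big[\frac{1}{L_R}\sum_r\frac{W_{rc}}{\phi^t_r}\big]^{-1}$ for a base matrix $W\in\mathbb{R}^{L_R\times L_C}$ with nonnegative entries and positive numbers $\phi^t_r$; $R$ is the rate in nats. *)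

(* Defs.v *)
From Stdlib Require Import Reals Lra Lia Arith ClassicalEpsilon.
Open Scope R_scope.

Definition RI (f : R -> R) (a b : R) : R :=
  match excluded_middle_informative (inhabited (Riemann_integrable f a b)) with
  | left H =>
      let pr := proj1_sig (constructive_indefinite_description
                  (fun _ : Riemann_integrable f a b => True)
                  (match H with inhabits p => ex_intro _ p I end)) in
      RiemannInt pr
  | right _ => 0
  end.

(* Improper integral over the whole real line:
   lim_{n -> oo} of int_{-n}^{n} f  (0 if the limit does not exist). *)
Definition full_int (f : R -> R) : R :=
  match excluded_middle_informative
          (exists l, Un_cv (fun n => RI f (- INR n) (INR n)) l) with
  | left H => proj1_sig (constructive_indefinite_description _ H)
  | right _ => 0
  end.

Definition gauss_density (x : R) : R := exp (- x ^ 2 / 2) / sqrt (2 * PI).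

(* gexp n f = E[ f(U) ] where U_0, ..., U_{n-1} are i.i.d. N(0,1)
   (coordinates i >= n of U are set to 0), computed as an iterated integral. *)
Fixpoint gexp (n : nat) (f : (nat -> R) -> R) : R :=
  match n with
  | O => f (fun _ => 0)
  | S k => full_int (fun x =>
             gauss_density x *
             gexp k (fun u => f (fun i => if Nat.eqb i k then x else u i)))
  end.

(* The integrand, with U_1, ..., U_M represented as u 0, ..., u (M-1):
   e^{U_1/sqrt tau} / (e^{U_1/sqrt tau} + e^{-1/tau} sum_{j=2}^M e^{U_j/sqrt tau}).
   Intended for M >= 2 (the sum sum_f_R0 _ (M-2) has M-1 terms). *)
Definition sparc_integrand (M : nat) (tau : R) (u : nat -> R) : R :=
  exp (u 0%nat / sqrt tau) /
  (exp (u 0%nat / sqrt tau) +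
   exp (- 1 / tau) * sum_f_R0 (fun j => exp (u (S j) / sqrt tau)) (M - 2)).

Definition calE (M : nat) (tau : R) : R := gexp M (sparc_integrand M tau).

Definition tauM (Rate q : R) (M : nat) : R := Rate / (q * ln (INR M)).

(* Main.v *)
Require Import Defs.
From Stdlib Require Import Reals.
From Coquelicot Require Import Coquelicot.
From Stdlib Require Import Reals Lra Lia ClassicalEpsilon Classical FunctionalExtensionality.
Open Scope R_scope.

Lemma exRInt_cont (f:R->R) a b : (forall z, Rmin a b <= z <= Rmax a b -> continuous f z) -> ex_RInt f a b.
Proof. exact (ex_RInt_continuous (V:=R_CompleteNormedModule) f a b). Qed.
Lemma cont_deriv (f:R->R) x : ex_derive f x -> continuous f x.
Proof. exact (ex_derive_continuous (K:=R_AbsRing) (V:=R_NormedModule) f x). Qed.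

Lemma RInt_scalR (f:R->R) a b l : ex_RInt f a b -> RInt (fun x => l * f x) a b = l * RInt f a b.
Proof. intro H. exact (RInt_scal f a b l H). Qed.
Lemma RInt_comp_linR (f:R->R) u v a b : ex_RInt f (u*a+v) (u*b+v) -> RInt (fun y => u * f (u*y+v)) a b = RInt f (u*a+v) (u*b+v).
Proof. intro H. exact (RInt_comp_lin f u v a b H). Qed.
Lemma RInt_plusR (f g:R->R) a b : ex_RInt f a b -> ex_RInt g a b -> RInt (fun x => f x + g x) a b = RInt f a b + RInt g a b.
Proof. intros H1 H2. exact (RInt_plus f g a b H1 H2). Qed.
Lemma RInt_constR a b c : RInt (fun _ => c) a b = (b - a) * c.
Proof. exact (RInt_const a b c). Qed.
Lemma RInt_ChaslesR (f:R->R) a b c : ex_RInt f a b -> ex_RInt f b c -> RInt f a b + RInt f b c = RInt f a c.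
Proof. intros H1 H2. exact (RInt_Chasles f a b c H1 H2). Qed.
Lemma RInt_pointR (f:R->R) a : RInt f a a = 0.
Proof. exact (RInt_point a f). Qed.

Lemma exp_le x y : x <= y -> exp x <= exp y.
Proof. intros [H|H]. left; apply exp_increasing; auto. subst; lra. Qed.

Ltac Req := match goal with |- ?a = ?b => change (@eq R a b) end.
Ltac Rring := Req; ring.

Definition gf (t:R) := exp (-(t*t)).
Lemma gf_cont x : continuous gf x.
Proof. apply cont_deriv; unfold gf; auto_derive; auto. Qed.
Lemma ex_RInt_gf a b : ex_RInt gf a b.
Proof. apply exRInt_cont; intros; apply gf_cont. Qed.
Definition GF x := RInt gf 0 x.
Lemma GF_deriv (x:R) : is_derive GF x (gf x).
Proof.
  apply is_derive_RInt with (a:=0).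
  - apply filter_forall; intros; apply RInt_correct, ex_RInt_gf.
  - apply gf_cont.
Qed.

Definition vf (u t : R) := exp (-(u*u)*(1+t*t)) / (1+t*t).
Definition V x := RInt (fun t => vf x t) 0 1.

Lemma pos1t t : 1 + t*t <> 0.
Proof. nra. Qed.

Lemma vf_deriv (u t:R) : is_derive (fun z => vf z t) u (-2*u*exp(-(u*u)*(1+t*t))).
Proof.
  unfold vf. auto_derive. exact I. field. apply pos1t.
Qed.

Lemma cont2_exp f x y : continuity_2d_pt f x y -> continuity_2d_pt (fun u v => exp (f u v)) x y.
Proof. intros; apply continuity_1d_2d_pt_comp; auto. apply derivable_continuous_pt, derivable_pt_exp. Qed.

Lemma V_deriv (x:R) : is_derive V x (-2 * gf x * GF x).
Proof.
  assert (H: is_derive V x (RInt (fun t => Derive (fun u => vf u t) x) 0 1)).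
  { apply (is_derive_RInt_param vf 0 1 x).
    - apply filter_forall; intros y t _. eexists; apply vf_deriv.
    - intros t _. apply continuity_2d_pt_ext with (f := fun u v => -2*u*exp(-(u*u)*(1+v*v))).
      + intros; symmetry; apply is_derive_unique, vf_deriv.
      + apply continuity_2d_pt_mult. apply continuity_2d_pt_mult.
        apply continuity_2d_pt_const. apply continuity_2d_pt_id1.
        apply cont2_exp. apply continuity_2d_pt_mult.
        apply continuity_2d_pt_opp, continuity_2d_pt_mult; apply continuity_2d_pt_id1.
        apply continuity_2d_pt_plus. apply continuity_2d_pt_const.
        apply continuity_2d_pt_mult; apply continuity_2d_pt_id2.
    - apply filter_forall; intros y. apply exRInt_cont; intros z _.
      apply cont_deriv; unfold vf; auto_derive; apply pos1t. }
  replace (-2 * gf x * GF x) with (RInt (fun t => Derive (fun u => vf u t) x) 0 1); auto.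
  rewrite (RInt_ext _ (fun t => (-2 * gf x) * (x * gf (x*t+0)))).
  2:{ intros t _. cbv beta. erewrite is_derive_unique; [|apply vf_deriv].
      unfold gf. replace (x*t+0) with (x*t) by ring.
      replace (-(x*x)*(1+t*t)) with (-(x*x) + -((x*t)*(x*t))) by ring. rewrite exp_plus. match goal with |- ?a = ?b => change (@eq R a b) end. ring. }
  rewrite RInt_scalR.
  2:{ apply exRInt_cont; intros; apply cont_deriv; unfold gf; auto_derive; auto. }
  rewrite RInt_comp_linR. 2: apply ex_RInt_gf.
  unfold GF. replace (x*0+0) with 0 by ring. replace (x*1+0) with x by ring. reflexivity.
Qed.

Definition hh x := GF x * GF x + V x.
Lemma hh_deriv (x:R) : is_derive hh x 0.
Proof.
  unfold hh. replace 0 with (gf x * GF x + GF x * gf x + (-2 * gf x * GF x)) by ring.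
  apply (is_derive_plus (K:=R_AbsRing) (V:=R_NormedModule)). apply (is_derive_mult (K:=R_AbsRing)); try apply GF_deriv. intros; apply Rmult_comm.
  apply V_deriv.
Qed.



Lemma GF0 : GF 0 = 0.
Proof. apply RInt_pointR. Qed.

Lemma V0 : V 0 = PI/4.
Proof.
  unfold V. rewrite (RInt_ext _ (fun t => / (1 + t^2))).
  2:{ intros t _. unfold vf. replace (-(0*0)*(1+t*t)) with 0 by ring. rewrite exp_0. simpl. field. nra. }
  rewrite <- atan_1. replace (atan 1) with (atan 1 - atan 0) by (rewrite atan_0; ring).
  apply is_RInt_unique.
  apply (is_RInt_derive (V:=R_CompleteNormedModule) atan (fun t => /(1+t^2))).
  - intros; apply is_derive_Reals, derivable_pt_lim_atan.
  - intros; apply cont_deriv; auto_derive; nra.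
Qed.

Lemma hh_cont x : continuity_pt hh x.
Proof. apply derivable_continuous_pt. exists 0. apply is_derive_Reals, hh_deriv. Qed.

Lemma hh_const x : hh x = PI/4.
Proof.
  destruct (MVT_gen hh 0 x (fun _ => 0)) as [c [_ Hc]].
  - intros; apply hh_deriv.
  - intros; apply hh_cont.
  - assert (hh 0 = PI/4) by (unfold hh; rewrite GF0, V0; ring). lra.
Qed.

Lemma ex_RInt_vf x : ex_RInt (fun t => vf x t) 0 1.
Proof. apply exRInt_cont; intros; apply cont_deriv; unfold vf; auto_derive; apply pos1t. Qed.

Lemma ex_RInt_cst (a b c : R) : ex_RInt (fun _ => c) a b.
Proof. apply exRInt_cont; intros; apply cont_deriv; auto_derive; auto. Qed.

Lemma RInt_ge0R (f:R->R) a b : a <= b -> ex_RInt f a b -> (forall x, a < x < b -> 0 <= f x) -> 0 <= RInt f a b.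
Proof.
  intros. apply Rle_trans with (RInt (fun _ => 0) a b).
  rewrite RInt_constR; lra. apply RInt_le; auto. apply ex_RInt_cst.
Qed.

Lemma RInt_le_cst (f:R->R) a b c : a <= b -> ex_RInt f a b -> (forall x, a < x < b -> f x <= c) -> RInt f a b <= (b-a)*c.
Proof.
  intros. rewrite <- RInt_constR. apply RInt_le; auto. apply ex_RInt_cst.
Qed.

Lemma RInt_ge_cst (f:R->R) a b c : a <= b -> ex_RInt f a b -> (forall x, a < x < b -> c <= f x) -> (b-a)*c <= RInt f a b.
Proof.
  intros. rewrite <- RInt_constR. apply RInt_le; auto. apply ex_RInt_cst.
Qed.

Lemma V_bounds x : 0 <= V x <= exp (-(x*x)).
Proof.
  unfold V. split.
  - apply RInt_ge0R. lra. apply ex_RInt_vf. intros t _. unfold vf. apply Rle_mult_inv_pos. apply Rlt_le, exp_pos. nra.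
  - replace (exp (-(x*x))) with ((1-0)*exp (-(x*x))) by ring.
    apply RInt_le_cst. lra. apply ex_RInt_vf.
    intros t Ht. unfold vf. apply Rle_trans with (exp (-(x*x)*(1+t*t))).
    + rewrite <- (Rmult_1_r (exp _)) at 2. unfold Rdiv. apply Rmult_le_compat_l. apply Rlt_le, exp_pos.
      rewrite <- Rinv_1. apply Rinv_le_contravar; nra.
    + apply exp_le; nra.
Qed.

Lemma sqrt2_sq : sqrt 2 * sqrt 2 = 2.
Proof. apply sqrt_sqrt; lra. Qed.
Lemma sqrt2_pos : 0 < sqrt 2.
Proof. apply sqrt_lt_R0; lra. Qed.
Lemma sqrtPI_pos : 0 < sqrt PI.
Proof. apply sqrt_lt_R0, PI_RGT_0. Qed.

Lemma dens_eq x : gauss_density x = / sqrt PI * (/ sqrt 2 * gf (/ sqrt 2 * x + 0)).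
Proof.
  unfold gauss_density, gf. rewrite sqrt_mult by (try lra; apply Rlt_le, PI_RGT_0).
  assert (H2 := sqrt2_sq). assert (H3:= sqrt2_pos). assert (H4 := sqrtPI_pos).
  replace (- ((/ sqrt 2 * x + 0) * (/ sqrt 2 * x + 0))) with (- x ^ 2 / 2).
  field; lra.
  replace ((/ sqrt 2 * x + 0) * (/ sqrt 2 * x + 0)) with (x*x/(sqrt 2 * sqrt 2)) by (field; lra).
  rewrite H2. field.
Qed.

Lemma GF_odd a : GF (-a) = - GF a.
Proof.
  unfold GF. replace (-a) with (-1*a+0) by ring. replace 0 with (-1*0+0) at 1 by ring.
  rewrite <- RInt_comp_linR. 2: apply ex_RInt_gf.
  replace (-1*0+0) with 0 by ring.
  rewrite (RInt_ext _ (fun y => -1 * gf y)). rewrite RInt_scalR. Rring. apply ex_RInt_gf.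
  intros y _. unfold gf. f_equal. f_equal. Rring.
Qed.

Lemma RInt_swapR (f:R->R) a b : ex_RInt f b a -> RInt f a b = - RInt f b a.
Proof. intro H. rewrite <- (opp_RInt_swap f b a H). reflexivity. Qed.

Lemma D_eq N : RInt gauss_density (-N) N = 2 / sqrt PI * GF (N / sqrt 2).
Proof.
  assert (H3:= sqrt2_pos). assert (H4 := sqrtPI_pos).
  rewrite (RInt_ext _ (fun x => / sqrt PI * (/ sqrt 2 * gf (/ sqrt 2 * x + 0)))).
  2: intros; apply dens_eq.
  rewrite RInt_scalR. 2:{ apply exRInt_cont; intros; apply cont_deriv; unfold gf; auto_derive; auto. }
  rewrite RInt_comp_linR. 2: apply ex_RInt_gf.
  rewrite <- (RInt_ChaslesR _ _ 0). 2,3: apply ex_RInt_gf.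
  rewrite RInt_swapR. 2: apply ex_RInt_gf. fold (GF (/ sqrt 2 * - N + 0)). fold (GF (/ sqrt 2 * N + 0)).
  replace (/ sqrt 2 * - N + 0) with (- (N / sqrt 2)) by (field; lra).
  replace (/ sqrt 2 * N + 0) with (N / sqrt 2) by (field; lra).
  rewrite GF_odd. Req. field. lra.
Qed.

Lemma GF_bounds a : 0 <= a -> 0 <= GF a /\ GF a <= sqrt PI / 2 /\ sqrt PI / 2 - GF a <= exp (-(a*a)) / (sqrt PI / 2).
Proof.
  intro Ha. assert (H4 := sqrtPI_pos).
  assert (G0 : 0 <= GF a). { apply RInt_ge0R; auto. apply ex_RInt_gf. intros; apply Rlt_le, exp_pos. }
  assert (Hs : (sqrt PI / 2) * (sqrt PI / 2) = PI / 4).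
  { replace (sqrt PI / 2 * (sqrt PI / 2)) with (sqrt PI * sqrt PI / 4) by field. rewrite sqrt_sqrt. auto.
    apply Rlt_le, PI_RGT_0. }
  assert (Hh := hh_const a). unfold hh in Hh. destruct (V_bounds a) as [V1 V2].
  set (s := sqrt PI / 2) in *. assert (0 < s) by (unfold s; lra).
  assert (GF a <= s) by nra.
  repeat split; auto.
  apply Rmult_le_reg_r with s; auto. unfold Rdiv. rewrite Rmult_assoc, Rinv_l by lra.
  nra.
Qed.

Lemma D_bounds N : 0 <= N -> 0 <= RInt gauss_density (-N) N <= 1 /\ 1 - RInt gauss_density (-N) N <= 4 * exp (-(N*N/2)) / PI.
Proof.
  intro HN. rewrite D_eq. assert (H3:= sqrt2_pos). assert (H4 := sqrtPI_pos).
  assert (Ha : 0 <= N / sqrt 2) by (apply Rle_mult_inv_pos; lra).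
  destruct (GF_bounds _ Ha) as [B1 [B2 B3]].
  replace (N / sqrt 2 * (N / sqrt 2)) with (N*N/2) in B3.
  2:{ replace (N / sqrt 2 * (N / sqrt 2)) with (N*N/(sqrt 2 * sqrt 2)) by (field; lra). rewrite sqrt2_sq; auto. }
  assert (HP : sqrt PI * sqrt PI = PI) by (apply sqrt_sqrt, Rlt_le, PI_RGT_0).
  set (g := GF (N / sqrt 2)) in *. set (e := exp (-(N*N/2))) in *. set (s := sqrt PI) in *.
  assert (0 <= e) by (apply Rlt_le, exp_pos).
  split. split.
  - apply Rmult_le_pos; auto. apply Rle_mult_inv_pos; lra.
  - replace (2 / s * g) with (g / (s/2)) by (field; lra).
    apply Rmult_le_reg_r with (s/2). lra. unfold Rdiv at 1. rewrite Rmult_assoc, Rinv_l by lra. lra.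
  - replace (1 - 2 / s * g) with ((s/2 - g) / (s/2)) by (field; lra).
    replace (4 * e / PI) with ((e / (s/2)) / (s/2)) by (rewrite <- HP; field; lra).
    unfold Rdiv at 1 3. apply Rmult_le_compat_r; auto. apply Rlt_le, Rinv_0_lt_compat; lra.
Qed.

Lemma RI_RInt f a b : ex_RInt f a b -> RI f a b = RInt f a b.
Proof.
  intro H. unfold RI. destruct excluded_middle_informative as [h|h].
  - destruct constructive_indefinite_description as [pr Hp]. simpl. symmetry; apply RInt_Reals.
  - exfalso; apply h. constructor. apply ex_RInt_Reals_0; auto.
Qed.

Lemma Rabs_le_inv x C : Rabs x <= C -> -C <= x <= C.
Proof. unfold Rabs; destruct Rcase_abs; lra. Qed.

Definition Good1 (phi : R -> R) := exists C L, 0 <= C /\ 0 <= L /\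
  (forall x, Rabs (phi x) <= C) /\ (forall x y, Rabs (phi x - phi y) <= L * Rabs (x - y)).

Lemma cont_pt (f : R -> R) x : continuity_pt f x -> continuous f x.
Proof. intro H. apply continuity_pt_filterlim; auto. Qed.
Lemma pt_cont (f : R -> R) x : continuous f x -> continuity_pt f x.
Proof. intro H. apply continuity_pt_filterlim; auto. Qed.

Lemma good1_cont_pt phi x : Good1 phi -> continuity_pt phi x.
Proof.
  intros [C [L [HC [HL [_ H]]]]]. intros e He. exists (e/(L+1)). split.
  apply Rdiv_lt_0_compat; lra.
  intros y [_ Hy]. simpl in *. unfold R_dist in *. eapply Rle_lt_trans. apply H.
  apply Rle_lt_trans with (L * (e/(L+1))). apply Rmult_le_compat_l; lra.
  apply Rlt_le_trans with ((L+1)*(e/(L+1))). apply Rmult_lt_compat_r. apply Rdiv_lt_0_compat; lra. lra.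
  right; field; lra.
Qed.

Lemma sqrt2PI_pos : 0 < sqrt (2*PI).
Proof. apply sqrt_lt_R0. assert (H:=PI_RGT_0). lra. Qed.

Lemma dens_cont_pt x : continuity_pt gauss_density x.
Proof. apply pt_cont, cont_deriv. unfold gauss_density. auto_derive. assert (H:=sqrt2PI_pos). lra. Qed.

Lemma dens_pos x : 0 < gauss_density x.
Proof. unfold gauss_density. apply Rdiv_lt_0_compat. apply exp_pos. apply sqrt2PI_pos. Qed.

Lemma ex_RInt_dphi phi a b : Good1 phi -> ex_RInt (fun x => gauss_density x * phi x) a b.
Proof.
  intro G. apply exRInt_cont. intros z _. apply cont_pt.
  apply (continuity_pt_mult gauss_density phi). apply dens_cont_pt. apply good1_cont_pt; auto.
Qed.

Lemma ex_RInt_dens a b : ex_RInt gauss_density a b.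
Proof. apply exRInt_cont. intros z _. apply cont_pt, dens_cont_pt. Qed.

Lemma ex_RInt_cdens c a b : ex_RInt (fun x => c * gauss_density x) a b.
Proof. apply exRInt_cont. intros z _. apply cont_pt, (continuity_pt_mult (fun _ => c) gauss_density).
  apply continuity_pt_const; intros ??; auto. apply dens_cont_pt. Qed.

Definition D N := RInt gauss_density (-N) N.
Definition Jn phi (N:R) := RInt (fun x => gauss_density x * phi x) (-N) N.
Definition J phi := full_int (fun x => gauss_density x * phi x).

Lemma D_mono n m : 0 <= n <= m -> D n <= D m.
Proof.
  intros Hn. unfold D.
  rewrite <- (RInt_ChaslesR _ (-m) (-n) m), <- (RInt_ChaslesR _ (-n) n m); try apply ex_RInt_dens.
  assert (0 <= RInt gauss_density (-m) (-n)). { apply RInt_ge0R. lra. apply ex_RInt_dens. intros; apply Rlt_le, dens_pos. }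
  assert (0 <= RInt gauss_density n m). { apply RInt_ge0R. lra. apply ex_RInt_dens. intros; apply Rlt_le, dens_pos. }
  lra.
Qed.

Lemma abs_RInt_dphi phi C a b : a <= b -> Good1 phi -> (forall x, Rabs (phi x) <= C) ->
  Rabs (RInt (fun x => gauss_density x * phi x) a b) <= C * RInt gauss_density a b.
Proof.
  intros Hab G HC. apply Rabs_le. split.
  - replace (- (C * RInt gauss_density a b)) with ((-C) * RInt gauss_density a b) by ring.
    rewrite <- RInt_scalR by apply ex_RInt_dens.
    apply RInt_le; auto. apply ex_RInt_cdens. apply ex_RInt_dphi; auto.
    intros x _. specialize (HC x). apply Rabs_le_inv in HC. assert (H:= dens_pos x). nra.
  - rewrite <- RInt_scalR by apply ex_RInt_dens.
    apply RInt_le; auto. apply ex_RInt_dphi; auto. apply ex_RInt_cdens.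
    intros x _. specialize (HC x). apply Rabs_le_inv in HC. assert (H:= dens_pos x). nra.
Qed.

Lemma Jn_diff phi C n m : 0 <= n <= m -> Good1 phi -> (forall x, Rabs (phi x) <= C) ->
  Rabs (Jn phi m - Jn phi n) <= C * (D m - D n).
Proof.
  intros Hn G HC. unfold Jn, D.
  rewrite <- (RInt_ChaslesR _ (-m) (-n) m), <- (RInt_ChaslesR _ (-n) n m); try apply ex_RInt_dphi; auto.
  rewrite <- (RInt_ChaslesR gauss_density (-m) (-n) m), <- (RInt_ChaslesR gauss_density (-n) n m); try apply ex_RInt_dens.
  match goal with |- Rabs (?A + (?B + ?E) - ?B) <= _ => replace (A + (B + E) - B) with (A + E) by ring end.
  eapply Rle_trans. apply Rabs_triang.
  assert (H1 := abs_RInt_dphi phi C (-m) (-n) ltac:(lra) G HC).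
  assert (H2 := abs_RInt_dphi phi C n m ltac:(lra) G HC).
  lra.
Qed.

Lemma Jn_diff2 phi C n m : 0 <= n <= m -> Good1 phi -> (forall x, Rabs (phi x) <= C) ->
  Rabs (Jn phi m - Jn phi n) <= C * (4 * exp (-(n*n/2)) / PI).
Proof.
  intros Hn G HC. eapply Rle_trans. apply Jn_diff; eauto.
  assert (0 <= C). { eapply Rle_trans. apply Rabs_pos. apply (HC 0). }
  apply Rmult_le_compat_l; auto.
  destruct (D_bounds m) as [[_ H1] _]. lra. destruct (D_bounds n) as [_ H2]. lra.
  unfold D. lra.
Qed.

Definition diverges (y : nat -> R) := forall B, exists N, forall n, (N <= n)%nat -> B <= y n.

Lemma exp_neg_le y : 0 <= y -> exp (-y) <= / (1 + y).
Proof.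
  intro Hy. assert (H := exp_ineq1_le y). rewrite exp_Ropp. apply Rinv_le_contravar; lra.
Qed.

Lemma cv_exp_neg y : diverges y -> Un_cv (fun n => exp (- y n)) 0.
Proof.
  intros Hd eps He. destruct (Hd (/eps)) as [N HN]. exists N. intros n Hn.
  specialize (HN n Hn). unfold R_dist. rewrite Rminus_0_r, Rabs_pos_eq by (apply Rlt_le, exp_pos).
  assert (0 < /eps) by (apply Rinv_0_lt_compat; auto).
  eapply Rle_lt_trans. apply exp_neg_le. lra.
  replace eps with (/ / eps) by (field; lra). apply Rinv_lt_contravar; nra.
Qed.

Lemma cv_scal0 u K : Un_cv u 0 -> Un_cv (fun n => K * u n) 0.
Proof.
  intro H. replace 0 with (K * 0) by ring. apply CV_mult; auto. intros e He; exists 0%nat; intros.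
  unfold R_dist; rewrite Rminus_diag, Rabs_R0; auto.
Qed.

Lemma squeeze0 u v : (exists N, forall n, (N <= n)%nat -> Rabs (u n) <= v n) -> Un_cv v 0 -> Un_cv u 0.
Proof.
  intros [N HN] Hv eps He. destruct (Hv eps He) as [N2 H2]. exists (max N N2). intros n Hn.
  specialize (HN n ltac:(lia)). specialize (H2 n ltac:(lia)). unfold R_dist in *.
  rewrite Rminus_0_r in *. eapply Rle_lt_trans. apply HN. eapply Rle_lt_trans. apply Rle_abs. auto.
Qed.

Lemma diverges_INR_sq : diverges (fun n => INR n * INR n / 2).
Proof.
  intros B. destruct (archimed (Rabs B)) as [H1 _].
  assert (0 <= IZR (up (Rabs B))) by (assert (H:=Rabs_pos B); lra).
  destruct (IZN (up (Rabs B))) as [k Hk]. apply le_IZR; lra.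
  exists (2 * k)%nat. intros n Hn. apply le_INR in Hn. rewrite mult_INR in Hn. simpl in Hn.
  rewrite Hk, <- INR_IZR_INZ in H1. assert (H3 := Rle_abs B). assert (H4 := Rabs_pos B). assert (0 <= INR k) by apply pos_INR.
  assert (INR n * INR n >= (2 * INR k) * (2 * INR k)) by nra.
  assert (1 <= INR k \/ INR k < 1) as [Hk1|Hk1] by lra. nra.
  assert (k = 0%nat). { destruct k; auto. rewrite S_INR in Hk1. assert (H5 := pos_INR k). lra. }
  subst. simpl in H1. lra.
Qed.

Lemma cauchy_bound (s t : nat -> R) : (forall n m, (n <= m)%nat -> Rabs (s m - s n) <= t n) -> Un_cv t 0 ->
  {L | Un_cv s L}.
Proof.
  intros H Ht. apply R_complete. intros eps He. destruct (Ht (eps/2)) as [N HN]. lra.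
  exists N. intros n m Hn Hm. unfold R_dist.
  assert (A1 := H N n Hn). assert (A2 := H N m Hm). specialize (HN N (le_n _)). unfold R_dist in HN.
  rewrite Rminus_0_r in HN. assert (HN' := Rle_abs (t N)).
  replace (s n - s m) with ((s n - s N) - (s m - s N)) by ring.
  eapply Rle_lt_trans. apply Rabs_triang. rewrite Rabs_Ropp. lra.
Qed.

Lemma J_spec phi : Good1 phi -> Un_cv (fun n => Jn phi (INR n)) (J phi).
Proof.
  intro G. destruct G as [C [L [HC [HL [HB HLip]]]]].
  assert (G : Good1 phi) by (exists C, L; auto).
  destruct (cauchy_bound (fun n => Jn phi (INR n)) (fun n => C * (4 * exp (-(INR n*INR n/2)) / PI))) as [l Hl].
  - intros n m Hnm. apply Jn_diff2; auto. split. apply pos_INR. apply le_INR; auto.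
  - apply (cv_scal0 (fun n => 4 * exp (-(INR n*INR n/2)) / PI) C).
    apply (Un_cv_ext (fun n => (4 / PI) * exp (-(INR n*INR n/2)))). intros; field. apply PI_neq0.
    apply cv_scal0. apply (cv_exp_neg (fun n => INR n * INR n / 2)). apply diverges_INR_sq.
  - replace (J phi) with l; auto. unfold J, full_int. destruct excluded_middle_informative as [h|h].
    + destruct constructive_indefinite_description as [l' Hl']. simpl.
      eapply UL_sequence. apply Hl. eapply Un_cv_ext. 2: apply Hl'. intros n. simpl.
      apply RI_RInt. apply ex_RInt_dphi; auto.
    + exfalso. apply h. exists l. eapply Un_cv_ext. 2: apply Hl. intros; simpl.
      symmetry; apply RI_RInt. apply ex_RInt_dphi; auto.
Qed.

Lemma Good1_plus f g : Good1 f -> Good1 g -> Good1 (fun x => f x + g x).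
Proof.
  intros [C1 [L1 [? [? [B1 L1']]]]] [C2 [L2 [? [? [B2 L2']]]]]. exists (C1+C2), (L1+L2).
  repeat split; try lra.
  - intros x. eapply Rle_trans. apply Rabs_triang. specialize (B1 x); specialize (B2 x); lra.
  - intros x y. replace (f x + g x - (f y + g y)) with ((f x - f y) + (g x - g y)) by ring.
    eapply Rle_trans. apply Rabs_triang. specialize (L1' x y); specialize (L2' x y); lra.
Qed.

Lemma Good1_scal f c : Good1 f -> Good1 (fun x => c * f x).
Proof.
  intros [C1 [L1 [? [? [B1 L1']]]]]. exists (Rabs c * C1), (Rabs c * L1).
  assert (Hc := Rabs_pos c).
  repeat split; try (apply Rmult_le_pos; auto).
  - intros x. rewrite Rabs_mult. apply Rmult_le_compat_l; auto.
  - intros x y. replace (c * f x - c * f y) with (c * (f x - f y)) by ring. rewrite Rabs_mult, Rmult_assoc.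
    apply Rmult_le_compat_l; auto.
Qed.

Lemma Good1_const c : Good1 (fun _ => c).
Proof.
  exists (Rabs c), 0. repeat split; try lra. apply Rabs_pos. intros; lra.
  intros. rewrite Rminus_diag, Rabs_R0. lra.
Qed.

Lemma Jn_le f g N : 0 <= N -> Good1 f -> Good1 g -> (forall x, f x <= g x) -> Jn f N <= Jn g N.
Proof.
  intros HN Gf Gg H. apply RInt_le. lra. apply ex_RInt_dphi; auto. apply ex_RInt_dphi; auto.
  intros x _. apply Rmult_le_compat_l; auto. apply Rlt_le, dens_pos.
Qed.

Lemma J_le f g : Good1 f -> Good1 g -> (forall x, f x <= g x) -> J f <= J g.
Proof.
  intros Gf Gg H. eapply Rle_cv_lim. 2: apply J_spec; auto. 2: apply J_spec; auto.
  intros n. apply Jn_le; auto. apply pos_INR.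
Qed.

Lemma J_plus f g : Good1 f -> Good1 g -> J (fun x => f x + g x) = J f + J g.
Proof.
  intros Gf Gg. eapply UL_sequence. apply J_spec, Good1_plus; auto.
  eapply Un_cv_ext. 2: apply CV_plus; apply J_spec; eauto.
  intros n. simpl. unfold Jn. rewrite <- RInt_plusR by (apply ex_RInt_dphi; auto).
  apply RInt_ext. intros; Rring.
Qed.

Lemma J_scal f c : Good1 f -> J (fun x => c * f x) = c * J f.
Proof.
  intros Gf. eapply UL_sequence. apply J_spec, Good1_scal; auto.
  eapply Un_cv_ext. 2: apply (CV_mult (fun _ => c)). 2: intros e He; exists 0%nat; intros; unfold R_dist; rewrite Rminus_diag, Rabs_R0; auto.
  2: apply J_spec; auto.
  intros n. simpl. unfold Jn. rewrite <- RInt_scalR by (apply ex_RInt_dphi; auto).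
  apply RInt_ext. intros; Rring.
Qed.

Lemma D_cv : Un_cv (fun n => D (INR n)) 1.
Proof.
  intros eps He.
  assert (H : Un_cv (fun n => 4 / PI * exp (-(INR n*INR n/2))) 0).
  { apply cv_scal0. apply (cv_exp_neg (fun n => INR n * INR n / 2)). apply diverges_INR_sq. }
  destruct (H eps He) as [N HN]. exists N. intros n Hn. specialize (HN n Hn). unfold R_dist in *.
  rewrite Rminus_0_r in HN. destruct (D_bounds (INR n) (pos_INR n)) as [[A B] C].
  fold (D (INR n)) in A, B, C.
  rewrite Rabs_left1 by lra. rewrite Rabs_pos_eq in HN. 2: { apply Rmult_le_pos. apply Rlt_le, Rdiv_lt_0_compat. lra. apply PI_RGT_0. apply Rlt_le, exp_pos. }
  replace (4 / PI * exp (- (INR n * INR n / 2))) with (4 * exp (- (INR n * INR n / 2)) / PI) in HN by (field; apply PI_neq0).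
  lra.
Qed.

Lemma cv_const c : Un_cv (fun _ => c) c.
Proof. intros e He; exists 0%nat; intros; unfold R_dist; rewrite Rminus_diag, Rabs_R0; auto. Qed.

Lemma J_const c : J (fun _ => c) = c.
Proof.
  eapply UL_sequence. apply J_spec, Good1_const.
  assert (H := CV_mult (fun _ => c) _ c 1 (cv_const c) D_cv). rewrite Rmult_1_r in H.
  eapply Un_cv_ext; [|apply H]. intros n. simpl. unfold Jn, D. rewrite <- RInt_scalR by apply ex_RInt_dens.
  apply RInt_ext; intros; Rring.
Qed.

Lemma J_le_bound f B : Good1 f -> (forall n, Jn f (INR n) <= B) -> J f <= B.
Proof.
  intros Gf H. eapply Rle_cv_lim. apply H. apply J_spec; auto.
  intros e He; exists 0%nat; intros; unfold R_dist; rewrite Rminus_diag, Rabs_R0; auto.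
Qed.

Lemma J_ge_bound f B : Good1 f -> (forall n, B <= Jn f (INR n)) -> B <= J f.
Proof.
  intros Gf H. eapply Rle_cv_lim. apply H. 
  intros e He; exists 0%nat; intros; unfold R_dist; rewrite Rminus_diag, Rabs_R0; auto.
  apply J_spec; auto.
Qed.

Definition upd (u : nat -> R) k x : nat -> R := fun i => if Nat.eqb i k then x else u i.

Definition Good (f : (nat -> R) -> R) := exists C L, 0 <= C /\ 0 <= L /\
  (forall u, Rabs (f u) <= C) /\ (forall u i y, Rabs (f (upd u i y) - f u) <= L * Rabs (y - u i)).

Lemma upd_same u k x : upd u k x k = x.
Proof. unfold upd. rewrite Nat.eqb_refl. auto. Qed.
Lemma upd_other u k x i : i <> k -> upd u k x i = u i.
Proof. intro H. unfold upd. apply Nat.eqb_neq in H. rewrite H. auto. Qed.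
Lemma upd_upd_same u k x y : upd (upd u k y) k x = upd u k x.
Proof. apply functional_extensionality; intro i. unfold upd. destruct (Nat.eqb i k); auto. Qed.
Lemma upd_comm u i k x y : i <> k -> upd (upd u i y) k x = upd (upd u k x) i y.
Proof.
  intro H. apply functional_extensionality; intro j. unfold upd.
  destruct (Nat.eqb_spec j k); destruct (Nat.eqb_spec j i); subst; auto. lia.
Qed.

Lemma gexp_ext k f g : (forall u, f u = g u) -> gexp k f = gexp k g.
Proof. intro H. replace f with g; auto. apply functional_extensionality; intro; auto. Qed.

Lemma J_ext f g : (forall x, f x = g x) -> J f = J g.
Proof. intro H. replace f with g; auto. apply functional_extensionality; intro; auto. Qed.

Lemma gexp_S k f : gexp (S k) f = J (fun x => gexp k (fun u => f (upd u k x))).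
Proof. reflexivity. Qed.

Lemma Good_plus f g : Good f -> Good g -> Good (fun u => f u + g u).
Proof.
  intros [C1 [L1 [? [? [B1 L1']]]]] [C2 [L2 [? [? [B2 L2']]]]]. exists (C1+C2), (L1+L2).
  repeat split; try lra.
  - intros x. eapply Rle_trans. apply Rabs_triang. specialize (B1 x); specialize (B2 x); lra.
  - intros u i y. match goal with |- Rabs (?a + ?b - (?c + ?d)) <= _ => replace (a + b - (c + d)) with ((a - c) + (b - d)) by ring end.
    eapply Rle_trans. apply Rabs_triang. specialize (L1' u i y); specialize (L2' u i y); lra.
Qed.

Lemma Good_scal f c : Good f -> Good (fun u => c * f u).
Proof.
  intros [C1 [L1 [? [? [B1 L1']]]]]. exists (Rabs c * C1), (Rabs c * L1).
  assert (Hc := Rabs_pos c).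
  repeat split; try (apply Rmult_le_pos; auto).
  - intros x. rewrite Rabs_mult. apply Rmult_le_compat_l; auto.
  - intros u i y. match goal with |- Rabs (c * ?a - c * ?b) <= _ => replace (c * a - c * b) with (c * (a - b)) by ring end.
    rewrite Rabs_mult, Rmult_assoc. apply Rmult_le_compat_l; auto.
Qed.

Lemma Good_const c : Good (fun _ => c).
Proof.
  exists (Rabs c), 0. repeat split; try lra. apply Rabs_pos. intros; lra.
  intros. rewrite Rminus_diag, Rabs_R0. lra.
Qed.

Lemma Good_mult f g : Good f -> Good g -> Good (fun u => f u * g u).
Proof.
  intros [C1 [L1 [? [? [B1 L1']]]]] [C2 [L2 [? [? [B2 L2']]]]]. exists (C1*C2), (L1*C2+C1*L2).
  repeat split; try (apply Rmult_le_pos; auto); try (apply Rplus_le_le_0_compat; apply Rmult_le_pos; auto).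
  - intros x. rewrite Rabs_mult. apply Rmult_le_compat; auto; apply Rabs_pos.
  - intros u i y. match goal with |- Rabs (?a * ?b - ?c * ?d) <= _ => replace (a * b - c * d) with ((a - c) * b + c * (b - d)) by ring end.
    eapply Rle_trans. apply Rabs_triang. rewrite !Rabs_mult.
    assert (A1 := L1' u i y). assert (A2 := L2' u i y). assert (A3 := B2 (upd u i y)). assert (A4 := B1 u).
    assert (0 <= Rabs (y - u i)) by apply Rabs_pos.
    assert (Rabs (f (upd u i y) - f u) * Rabs (g (upd u i y)) <= L1 * Rabs (y - u i) * C2).
    { apply Rmult_le_compat; auto; apply Rabs_pos. }
    assert (Rabs (f u) * Rabs (g (upd u i y) - g u) <= C1 * (L2 * Rabs (y - u i))).
    { apply Rmult_le_compat; auto; apply Rabs_pos. }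
    nra.
Qed.

Lemma Good_coord phi j : Good1 phi -> Good (fun u => phi (u j)).
Proof.
  intros [C [L [? [? [B Lp]]]]]. exists C, L. repeat split; auto.
  intros u i y. destruct (Nat.eq_dec i j).
  - subst. rewrite upd_same. apply Lp.
  - rewrite upd_other by auto. rewrite Rminus_diag, Rabs_R0. apply Rmult_le_pos; auto; apply Rabs_pos.
Qed.

Lemma Good_shift f k x : Good f -> Good (fun u => f (upd u k x)).
Proof.
  intros [C [L [? [? [B Lp]]]]]. exists C, L. repeat split; auto.
  intros u i y. destruct (Nat.eq_dec i k).
  - subst. rewrite upd_upd_same. rewrite Rminus_diag, Rabs_R0. apply Rmult_le_pos; auto; apply Rabs_pos.
  - rewrite upd_comm by auto. replace (u i) with (upd u k x i) by (apply upd_other; auto). apply Lp.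
Qed.

Lemma Good_bound f : Good f -> exists C, forall u, Rabs (f u) <= C.
Proof. intros [C [L [? [? [B _]]]]]. eauto. Qed.

Lemma Good_shift_lip f k : Good f -> exists L, 0 <= L /\ forall u x y, Rabs (f (upd u k x) - f (upd u k y)) <= L * Rabs (x - y).
Proof.
  intros [C [L [? [? [B Lp]]]]]. exists L. split; auto. intros u x y.
  specialize (Lp (upd u k y) k x). rewrite upd_upd_same, upd_same in Lp. auto.
Qed.

Definition Props k :=
 (forall f g, Good f -> Good g -> (forall u, f u <= g u) -> gexp k f <= gexp k g) /\
 (forall f g, Good f -> Good g -> gexp k (fun u => f u + g u) = gexp k f + gexp k g) /\
 (forall f c, Good f -> gexp k (fun u => c * f u) = c * gexp k f) /\
 (forall c, gexp k (fun _ => c) = c).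

Lemma props_good1 k f : Props k -> Good f -> Good1 (fun x => gexp k (fun u => f (upd u k x))).
Proof.
  intros [Hm [Hp [Hs Hc]]] Gf.
  destruct (Good_bound f Gf) as [C HC]. destruct (Good_shift_lip f k Gf) as [L [HL HLp]].
  assert (HC0 : 0 <= C) by (eapply Rle_trans; [apply Rabs_pos|apply (HC (fun _ => 0))]).
  exists C, L. repeat split; auto.
  - intros x. apply Rabs_le. split.
    + rewrite <- (Hc (-C)). apply Hm. apply Good_const. apply Good_shift; auto.
      intros u. destruct (Rabs_le_inv _ _ (HC (upd u k x))); lra.
    + rewrite <- (Hc C). apply Hm. apply Good_shift; auto. apply Good_const.
      intros u. destruct (Rabs_le_inv _ _ (HC (upd u k x))); lra.
  - intros x y. apply Rabs_le. split.
    + assert (gexp k (fun u => f (upd u k y)) <= gexp k (fun u => f (upd u k x) + L * Rabs (x - y))).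
      { apply Hm. apply Good_shift; auto. apply Good_plus. apply Good_shift; auto. apply Good_const.
        intros u. specialize (HLp u x y). apply Rabs_le_inv in HLp. lra. }
      rewrite Hp, Hc in H; try apply Good_shift; auto; try apply Good_const. lra.
    + assert (gexp k (fun u => f (upd u k x)) <= gexp k (fun u => f (upd u k y) + L * Rabs (x - y))).
      { apply Hm. apply Good_shift; auto. apply Good_plus. apply Good_shift; auto. apply Good_const.
        intros u. specialize (HLp u x y). apply Rabs_le_inv in HLp. lra. }
      rewrite Hp, Hc in H; try apply Good_shift; auto; try apply Good_const. lra.
Qed.

Lemma gexp_props k : Props k.
Proof.
  induction k as [|k IH].
  - repeat split; simpl; intros; auto.
  - assert (G1 := fun f => props_good1 k f IH). destruct IH as [Hm [Hp [Hs Hc]]].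
    repeat split.
    + intros f g Gf Gg H. rewrite !gexp_S. apply J_le; auto. intros x. apply Hm; try apply Good_shift; auto.
    + intros f g Gf Gg. rewrite !gexp_S. rewrite <- J_plus; auto. apply J_ext. intros x.
      apply (Hp (fun u => f (upd u k x)) (fun u => g (upd u k x))); apply Good_shift; auto.
    + intros f c Gf. rewrite !gexp_S. rewrite <- J_scal; auto. apply J_ext. intros x.
      apply (Hs (fun u => f (upd u k x))); apply Good_shift; auto.
    + intros c. rewrite gexp_S. transitivity (J (fun _ => c)). apply J_ext. intros; apply Hc. apply J_const.
Qed.

Lemma gexp_mono k f g : Good f -> Good g -> (forall u, f u <= g u) -> gexp k f <= gexp k g.
Proof. apply (gexp_props k). Qed.
Lemma gexp_plus k f g : Good f -> Good g -> gexp k (fun u => f u + g u) = gexp k f + gexp k g.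
Proof. apply (gexp_props k). Qed.
Lemma gexp_scal k f c : Good f -> gexp k (fun u => c * f u) = c * gexp k f.
Proof. apply (gexp_props k). Qed.
Lemma gexp_const k c : gexp k (fun _ => c) = c.
Proof. apply (gexp_props k). Qed.

Lemma gexp_good1 k f : Good f -> Good1 (fun x => gexp k (fun u => f (upd u k x))).
Proof. apply props_good1, gexp_props. Qed.

Lemma gexp_prod k F h : Good F -> Good1 h -> (forall u x, F (upd u k x) = F u) ->
  gexp (S k) (fun u => F u * h (u k)) = gexp k F * J h.
Proof.
  intros GF Gh HF. rewrite gexp_S.
  transitivity (J (fun x => gexp k F * h x)).
  - apply J_ext. intros x. rewrite (gexp_ext k _ (fun u => h x * F u)).
    rewrite gexp_scal; auto. ring. intros u. rewrite HF, upd_same. ring.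
  - apply J_scal; auto.
Qed.

Lemma gexp_indep k F : Good F -> (forall u x, F (upd u k x) = F u) -> gexp (S k) F = gexp k F.
Proof.
  intros GF HF. rewrite gexp_S. transitivity (J (fun _ => gexp k F)).
  apply J_ext. intros x. apply gexp_ext. auto. apply J_const.
Qed.

Lemma gexp_coord M j phi : Good1 phi -> (j < M)%nat -> gexp M (fun u => phi (u j)) = J phi.
Proof.
  intros Gp HM. induction M as [|M IH]. lia.
  destruct (Nat.eq_dec j M).
  - subst. rewrite (gexp_ext _ _ (fun u => (fun _ => 1) u * phi (u M))) by (intros; ring).
    rewrite gexp_prod; auto. rewrite gexp_const. ring. apply Good_const.
  - rewrite gexp_indep. apply IH; lia. apply Good_coord; auto.
    intros u x. rewrite upd_other; auto.
Qed.

Lemma Good_sum n (F : nat -> (nat -> R) -> R) : (forall j, (j <= n)%nat -> Good (F j)) ->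
  Good (fun u => sum_f_R0 (fun j => F j u) n).
Proof.
  induction n as [|n IH]; intros H; simpl. apply H; lia.
  apply Good_plus. apply IH; intros; apply H; lia. apply H; lia.
Qed.

Lemma gexp_sum M n (F : nat -> (nat -> R) -> R) : (forall j, (j <= n)%nat -> Good (F j)) ->
  gexp M (fun u => sum_f_R0 (fun j => F j u) n) = sum_f_R0 (fun j => gexp M (F j)) n.
Proof.
  induction n as [|n IH]; intros H; simpl. auto.
  rewrite gexp_plus; [rewrite IH; [reflexivity| intros; apply H; lia] | apply Good_sum; intros; apply H; lia | apply H; lia].
Qed.

Definition Ph (h : R -> R) m (u : nat -> R) := prod_f_R0 (fun j => h (u (S j))) m.

Lemma Good_Ph h m : Good1 h -> Good (Ph h m).
Proof.
  intros Gh. induction m as [|m IH]; unfold Ph; simpl.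
  apply Good_coord; auto. apply Good_mult; auto. apply Good_coord; auto.
Qed.

Lemma Ph_upd h m u k x : (S m < k)%nat -> Ph h m (upd u k x) = Ph h m u.
Proof.
  intros Hk. unfold Ph. induction m as [|m IH]; simpl.
  rewrite upd_other; auto; lia. rewrite IH by lia. rewrite upd_other; auto; lia.
Qed.

Lemma gexp_Ph h m : Good1 h -> gexp (S (S m)) (Ph h m) = J h ^ (S m).
Proof.
  intros Gh. induction m as [|m IH].
  - transitivity (gexp 2 (fun u => h (u 1%nat))). reflexivity. rewrite (gexp_coord 2 1 h); auto. simpl; ring.
  - rewrite (gexp_ext _ _ (fun u => Ph h m u * h (u (S (S m))))) by (intros; reflexivity).
    rewrite gexp_prod; auto. rewrite IH. simpl. ring. apply Good_Ph; auto.
    intros; apply Ph_upd; lia.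
Qed.

Definition cap (t:R) := Rmin 1 (exp t).
Definition clamp (t:R) := Rmax 0 (Rmin 1 t).

Lemma exp_le_1 t : t <= 0 -> exp t <= 1.
Proof. intro. rewrite <- exp_0. apply exp_le; auto. Qed.
Lemma exp_ge_1 t : 0 <= t -> 1 <= exp t.
Proof. intro. rewrite <- exp_0. apply exp_le; auto. Qed.

Lemma exp_diff_le s t : s <= t <= 0 -> exp t - exp s <= t - s.
Proof.
  intros H. assert (E : exp s = exp t * exp (s - t)) by (rewrite <- exp_plus; f_equal; ring).
  assert (H1 := exp_ineq1_le (s - t)). assert (H2 := exp_le_1 t ltac:(lra)). assert (H3 := exp_pos t).
  rewrite E. nra.
Qed.

Lemma cap_lip0 t s : s <= t -> Rabs (cap t - cap s) <= Rabs (t - s).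
Proof.
  unfold cap. intros Hst. rewrite (Rabs_pos_eq (t - s)) by lra.
  destruct (Rle_dec 0 s).
  - rewrite !Rmin_left; try (apply exp_ge_1; lra). rewrite Rminus_diag, Rabs_R0; lra.
  - destruct (Rle_dec 0 t).
    + rewrite Rmin_left by (apply exp_ge_1; lra). rewrite Rmin_right by (apply exp_le_1; lra).
      assert (H1 := exp_diff_le s 0 ltac:(lra)). rewrite exp_0 in H1. assert (H2 := exp_le_1 s ltac:(lra)).
      rewrite Rabs_pos_eq; lra.
    + rewrite !Rmin_right by (apply exp_le_1; lra).
      assert (H1 := exp_diff_le s t ltac:(lra)). assert (exp s <= exp t) by (apply exp_le; lra).
      rewrite Rabs_pos_eq; lra.
Qed.

Lemma cap_lip t s : Rabs (cap t - cap s) <= Rabs (t - s).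
Proof.
  destruct (Rle_dec s t). apply cap_lip0; auto. rewrite Rabs_minus_sym, (Rabs_minus_sym t). apply cap_lip0; lra.
Qed.

Lemma cap_bounds t : 0 <= cap t <= 1.
Proof. unfold cap. unfold Rmin. destruct Rle_dec; try lra. assert (H := exp_pos t). lra. Qed.

Lemma Good1_cap a b : Good1 (fun x => cap (a*x+b)).
Proof.
  exists 1, (Rabs a). repeat split; try lra. apply Rabs_pos.
  - intros x. destruct (cap_bounds (a*x+b)). rewrite Rabs_pos_eq; lra.
  - intros x y. eapply Rle_trans. apply cap_lip. right. rewrite <- Rabs_mult. f_equal. ring.
Qed.

Lemma cap_le_exp a mu t : 0 <= mu <= a -> cap (a*t) <= exp (mu*t).
Proof.
  intros H. unfold cap. destruct (Rle_dec 0 t).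
  - apply Rle_trans with 1. apply Rmin_l. apply exp_ge_1. nra.
  - apply Rle_trans with (exp (a*t)). apply Rmin_r. apply exp_le. nra.
Qed.

Lemma clamp_bounds t : 0 <= clamp t <= 1.
Proof. unfold clamp, Rmax, Rmin. repeat destruct Rle_dec; lra. Qed.

Lemma clamp_lip t s : Rabs (clamp t - clamp s) <= Rabs (t - s).
Proof. unfold clamp, Rmax, Rmin. repeat destruct Rle_dec; unfold Rabs; repeat destruct Rcase_abs; lra. Qed.

Lemma Good1_clamp b : Good1 (fun x => clamp (x + b)).
Proof.
  exists 1, 1. repeat split; try lra.
  - intros x. destruct (clamp_bounds (x+b)). rewrite Rabs_pos_eq; lra.
  - intros x y. eapply Rle_trans. apply clamp_lip. right. rewrite Rmult_1_l. f_equal. ring.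
Qed.

Lemma clamp_ge1 t : 1 <= t -> clamp t = 1.
Proof. intro. unfold clamp, Rmax, Rmin. repeat destruct Rle_dec; lra. Qed.
Lemma clamp_le0 t : t <= 0 -> clamp t = 0.
Proof. intro. unfold clamp, Rmax, Rmin. repeat destruct Rle_dec; lra. Qed.

Lemma dens_shift c m x : gauss_density x * exp (c*(x-m)) = exp (c*c/2 - c*m) * gauss_density (x - c).
Proof.
  unfold gauss_density.
  assert (E: exp (-x^2/2) * exp (c*(x-m)) = exp (c*c/2 - c*m) * exp (-(x-c)^2/2)) by (rewrite <- !exp_plus; f_equal; field).
  assert (H := sqrt2PI_pos).
  transitivity ((exp(-x^2/2)*exp(c*(x-m))) / sqrt (2*PI)). field; lra. rewrite E. field; lra.
Qed.

Lemma RInt_dens_le a b : a <= b -> RInt gauss_density a b <= 1.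
Proof.
  intros Hab. set (N := Rmax (Rabs a) (Rabs b)).
  assert (Ha : -N <= a) by (unfold N; assert (H:=Rmax_l (Rabs a) (Rabs b)); assert (H2 := Rle_abs (-a)); rewrite Rabs_Ropp in H2; lra).
  assert (Hb : b <= N) by (unfold N; assert (H:=Rmax_r (Rabs a) (Rabs b)); assert (H2 := Rle_abs b); lra).
  destruct (D_bounds N) as [[_ H1] _]. lra.
  rewrite <- (RInt_ChaslesR _ (-N) a N), <- (RInt_ChaslesR _ a b N) in H1; try apply ex_RInt_dens.
  assert (0 <= RInt gauss_density (-N) a). { apply RInt_ge0R; auto. apply ex_RInt_dens. intros; apply Rlt_le, dens_pos. }
  assert (0 <= RInt gauss_density b N). { apply RInt_ge0R; auto. apply ex_RInt_dens. intros; apply Rlt_le, dens_pos. }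
  lra.
Qed.

Lemma mgf_bound phi c m : Good1 phi -> (forall x, phi x <= exp (c*(x-m))) -> J phi <= exp (c*c/2 - c*m).
Proof.
  intros G H. apply J_le_bound; auto. intros n. unfold Jn.
  assert (HN := pos_INR n). set (N := INR n) in *.
  apply Rle_trans with (RInt (fun x => exp (c*c/2 - c*m) * gauss_density (x + - c)) (-N) N).
  - apply RInt_le. lra. apply ex_RInt_dphi; auto.
    apply exRInt_cont; intros; apply cont_deriv; unfold gauss_density; auto_derive. assert (H2:=sqrt2PI_pos). lra.
    intros x _. replace (x + - c) with (x - c) by ring. rewrite <- dens_shift.
    apply Rmult_le_compat_l. apply Rlt_le, dens_pos. auto.
  - rewrite RInt_scalR.
    2:{ apply exRInt_cont; intros; apply cont_deriv; unfold gauss_density; auto_derive. assert (H2:=sqrt2PI_pos). lra. }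
    rewrite <- (Rmult_1_r (exp _)) at 2. apply Rmult_le_compat_l. apply Rlt_le, exp_pos.
    rewrite (RInt_ext _ (fun x => 1 * gauss_density (1 * x + - c))) by (intros; Req; rewrite !Rmult_1_l; reflexivity).
    rewrite RInt_comp_linR by apply ex_RInt_dens. apply RInt_dens_le. lra.
Qed.

Lemma J_ge_bound_ev f B : Good1 f -> (exists N0, forall n, (N0 <= n)%nat -> B <= Jn f (INR n)) -> B <= J f.
Proof.
  intros Gf [N0 H]. destruct (Rle_dec B (J f)) as [|Hn]; auto. exfalso.
  destruct (J_spec f Gf (B - J f)) as [N1 HN1]. lra.
  specialize (HN1 (max N0 N1) ltac:(lia)). specialize (H (max N0 N1) ltac:(lia)).
  unfold R_dist in HN1. assert (H2 := Rle_abs (Jn f (INR (max N0 N1)) - J f)). lra.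
Qed.

Lemma dens_decr x y : 0 <= x <= y -> gauss_density y <= gauss_density x.
Proof.
  intros H. unfold gauss_density, Rdiv. apply Rmult_le_compat_r.
  apply Rlt_le, Rinv_0_lt_compat, sqrt2PI_pos. apply exp_le. nra.
Qed.

Lemma J_lower psi a : Good1 psi -> 0 <= a -> (forall x, 0 <= psi x) -> (forall x, a <= x <= a+1 -> 1 <= psi x) ->
  gauss_density (a+1) <= J psi.
Proof.
  intros G Ha H0 H1. apply J_ge_bound_ev; auto.
  destruct (archimed (a+1)) as [Hu _]. destruct (IZN (up (a+1))) as [k Hk]. apply le_IZR. lra.
  exists k. intros n Hn. unfold Jn. apply le_INR in Hn. rewrite Hk, <- INR_IZR_INZ in Hu.
  assert (HN : a + 1 <= INR n) by lra. set (N := INR n) in *.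
  rewrite <- (RInt_ChaslesR _ (-N) a N), <- (RInt_ChaslesR _ a (a+1) N); try apply ex_RInt_dphi; auto.
  assert (0 <= RInt (fun x => gauss_density x * psi x) (-N) a).
  { apply RInt_ge0R. lra. apply ex_RInt_dphi; auto. intros; apply Rmult_le_pos; auto. apply Rlt_le, dens_pos. }
  assert (0 <= RInt (fun x => gauss_density x * psi x) (a+1) N).
  { apply RInt_ge0R. lra. apply ex_RInt_dphi; auto. intros; apply Rmult_le_pos; auto. apply Rlt_le, dens_pos. }
  assert ((a+1-a) * gauss_density (a+1) <= RInt (fun x => gauss_density x * psi x) a (a+1)).
  { apply RInt_ge_cst. lra. apply ex_RInt_dphi; auto. intros x Hx.
    assert (gauss_density (a+1) <= gauss_density x) by (apply dens_decr; lra).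
    assert (1 <= psi x) by (apply H1; lra). assert (H5:=dens_pos x). nra. }
  lra.
Qed.

Lemma sig_lip0 K t t' : 0 <= K -> t' <= t -> Rabs (1/(1+K*exp t) - 1/(1+K*exp t')) <= Rabs (t - t').
Proof.
  intros HK Ht. set (x := K * exp t). set (x' := K * exp t').
  assert (Hx' : 0 <= x') by (unfold x'; apply Rmult_le_pos; auto; apply Rlt_le, exp_pos).
  assert (Hxx : x' <= x) by (unfold x, x'; apply Rmult_le_compat_l; auto; apply exp_le; auto).
  assert (Hd : x - x' <= x * (t - t')).
  { unfold x, x'. assert (E : exp t' = exp t * exp (t' - t)) by (rewrite <- exp_plus; f_equal; ring).
    rewrite E. assert (H1 := exp_ineq1_le (t' - t)). assert (H3 : 0 <= K * exp t) by (apply Rmult_le_pos; auto; apply Rlt_le, exp_pos).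
    replace (K * (exp t * exp (t' - t))) with ((K * exp t) * exp (t' - t)) by ring. nra. }
  rewrite Rabs_left1. 2:{ apply Rle_minus. unfold Rdiv. rewrite !Rmult_1_l. apply Rinv_le_contravar; lra. }
  rewrite Rabs_pos_eq by lra.
  replace (- (1 / (1 + x) - 1 / (1 + x'))) with ((x - x') / ((1+x)*(1+x'))) by (field; lra).
  apply Rle_trans with (x * (t - t') / ((1+x)*(1+x'))).
  - unfold Rdiv. apply Rmult_le_compat_r; auto. apply Rlt_le, Rinv_0_lt_compat; nra.
  - assert (HP : 0 < (1+x)*(1+x')) by nra.
    assert (Hq : x / ((1+x)*(1+x')) <= 1).
    { apply Rmult_le_reg_r with ((1+x)*(1+x')). auto. unfold Rdiv. rewrite Rmult_assoc, Rinv_l by lra. nra. }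
    replace (x * (t - t') / ((1 + x) * (1 + x'))) with ((x / ((1+x)*(1+x'))) * (t - t')) by (field; lra).
    assert (0 <= x / ((1+x)*(1+x'))) by (apply Rle_mult_inv_pos; lra). nra.
Qed.

Lemma sig_lip K t t' : 0 <= K -> Rabs (1/(1+K*exp t) - 1/(1+K*exp t')) <= Rabs (t - t').
Proof.
  intros HK. destruct (Rle_dec t' t). apply sig_lip0; auto.
  rewrite Rabs_minus_sym, (Rabs_minus_sym t). apply sig_lip0; auto; lra.
Qed.

Lemma frac_lip E0 A B t t' : 0 < E0 -> 0 <= A -> 0 <= B ->
  Rabs (E0/(E0 + A + B * exp t) - E0/(E0 + A + B * exp t')) <= Rabs (t - t').
Proof.
  intros H0 HA HB. assert (Et := exp_pos t). assert (Et' := exp_pos t').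
  assert (Hk : 0 <= B / (E0 + A)) by (apply Rle_mult_inv_pos; lra).
  replace (E0/(E0 + A + B * exp t) - E0/(E0 + A + B * exp t')) with
    ((E0/(E0+A)) * (1/(1 + B/(E0+A) * exp t) - 1/(1 + B/(E0+A) * exp t'))).
  2:{ field. repeat split; try lra. all: apply Rgt_not_eq; unfold Rdiv; try nra.
      all: assert (0 <= B * / (E0 + A) * exp t) by (apply Rmult_le_pos; auto; lra).
      all: assert (0 <= B * / (E0 + A) * exp t') by (apply Rmult_le_pos; auto; lra). all: nra. }
  rewrite Rabs_mult. rewrite <- (Rmult_1_l (Rabs (t - t'))).
  apply Rmult_le_compat. apply Rabs_pos. apply Rabs_pos.
  rewrite Rabs_pos_eq. apply Rmult_le_reg_r with (E0+A). lra. unfold Rdiv. rewrite Rmult_assoc, Rinv_l by lra. lra.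
  apply Rle_mult_inv_pos; lra.
  apply sig_lip; auto.
Qed.

Definition Fs a n (u : nat -> R) :=
  exp (a * u 0%nat) / (exp (a * u 0%nat) + exp (-(a*a)) * sum_f_R0 (fun j => exp (a * u (S j))) n).

Lemma sqrt_pos_lt tau : 0 < tau -> 0 < sqrt tau.
Proof. intros; apply sqrt_lt_R0; auto. Qed.

Lemma sparc_eq tau n : 0 < tau -> sparc_integrand (n+2) tau = Fs (/ sqrt tau) n.
Proof.
  intros Ht. apply functional_extensionality. intros u. unfold sparc_integrand, Fs.
  replace (n + 2 - 2)%nat with n by lia. assert (Hs := sqrt_pos_lt tau Ht).
  assert (E1 : forall y, y / sqrt tau = / sqrt tau * y) by (intros; unfold Rdiv; ring).
  rewrite E1. f_equal. f_equal. f_equal.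
  - f_equal. replace (- (/ sqrt tau * / sqrt tau)) with (-1 / (sqrt tau * sqrt tau)) by (field; lra).
    rewrite sqrt_sqrt by lra. auto.
  - apply sum_eq. intros. rewrite E1. auto.
Qed.

Lemma sum_nonneg F n : (forall j, 0 <= F j) -> 0 <= sum_f_R0 F n.
Proof. intros H. induction n; simpl. auto. specialize (H (S n)). lra. Qed.

Lemma term_le_sum F n i : (forall j, 0 <= F j) -> (i <= n)%nat -> F i <= sum_f_R0 F n.
Proof.
  intros H Hi. induction n; simpl.
  - replace i with 0%nat by lia. lra.
  - destruct (Nat.eq_dec i (S n)). subst. assert (H1 := sum_nonneg F n H). lra.
    assert (H1 := IHn ltac:(lia)). specialize (H (S n)). lra.
Qed.

Lemma sum_upd F n i v : (i <= n)%nat -> sum_f_R0 (fun j => if Nat.eqb j i then v else F j) n = sum_f_R0 F n - F i + v.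
Proof.
  intros Hi. induction n; cbn [sum_f_R0].
  - replace i with 0%nat by lia. simpl. ring.
  - destruct (Nat.eq_dec i (S n)).
    + subst. rewrite Nat.eqb_refl. rewrite (sum_eq _ F). ring.
      intros j Hj. destruct (Nat.eqb_spec j (S n)). lia. auto.
    + rewrite IHn by lia. destruct (Nat.eqb_spec (S n) i). lia. ring.
Qed.

Lemma Fs_bounds a n u : 0 < Fs a n u <= 1.
Proof.
  unfold Fs. assert (H1 := exp_pos (a * u 0%nat)). assert (H2 := exp_pos (-(a*a))).
  assert (H3 : 0 <= sum_f_R0 (fun j => exp (a * u (S j))) n) by (apply sum_nonneg; intros; apply Rlt_le, exp_pos).
  assert (0 <= exp (-(a*a)) * sum_f_R0 (fun j => exp (a * u (S j))) n) by (apply Rmult_le_pos; lra).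
  split. apply Rdiv_lt_0_compat; lra.
  apply Rmult_le_reg_r with (exp (a * u 0%nat) + exp (- (a * a)) * sum_f_R0 (fun j : nat => exp (a * u (S j))) n). lra.
  unfold Rdiv. rewrite Rmult_assoc, Rinv_l by lra. lra.
Qed.

Lemma Good_Fs a n : 0 < a -> Good (Fs a n).
Proof.
  intros Ha. exists 1, a. repeat split; try lra.
  - intros u. destruct (Fs_bounds a n u). rewrite Rabs_pos_eq; lra.
  - intros u i y. set (eps := exp (-(a*a))). assert (He : 0 < eps) by apply exp_pos.
    destruct i as [|i].
    +
      unfold Fs. rewrite upd_same. fold eps.
      change (sum_f_R0 (fun j => exp (a * upd u 0 y (S j))) n) with (sum_f_R0 (fun j => exp (a * u (S j))) n).
      set (T := eps * sum_f_R0 (fun j => exp (a * u (S j))) n).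
      assert (HT : 0 <= T) by (unfold T; apply Rmult_le_pos; [lra|apply sum_nonneg; intros; apply Rlt_le, exp_pos]).
      assert (Q : forall z, exp (a*z) / (exp (a*z) + T) = 1 / (1 + T * exp (-(a*z)))).
      { intros z. rewrite exp_Ropp. assert (H := exp_pos (a*z)).
        assert (0 <= T * / exp (a * z)) by (apply Rmult_le_pos; auto; apply Rlt_le, Rinv_0_lt_compat; auto).
        field. repeat split; try lra. }
      rewrite !Q. eapply Rle_trans. apply sig_lip; auto. right.
      replace (- (a*y) - - (a * u 0%nat)) with (-a * (y - u 0%nat)) by ring. rewrite Rabs_mult.
      rewrite Rabs_Ropp, Rabs_pos_eq by lra. auto.
    + destruct (Compare_dec.le_lt_dec i n) as [Hi|Hi].
      * unfold Fs. rewrite upd_other by lia. fold eps.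
        rewrite (sum_eq (fun j => exp (a * upd u (S i) y (S j))) (fun j => if Nat.eqb j i then exp (a*y) else exp (a * u (S j)))).
        2:{ intros j _. unfold upd. simpl. destruct (Nat.eqb j i); auto. }
        rewrite sum_upd by auto.
        set (S0 := sum_f_R0 (fun j => exp (a * u (S j))) n).
        assert (HS : exp (a * u (S i)) <= S0) by (apply (term_le_sum (fun j => exp (a * u (S j)))); auto; intros; apply Rlt_le, exp_pos).
        set (E0 := exp (a * u 0%nat)). assert (HE0 : 0 < E0) by apply exp_pos.
        replace (E0 + eps * (S0 - exp (a * u (S i)) + exp (a * y))) with (E0 + eps * (S0 - exp (a * u (S i))) + eps * exp (a*y)) by ring.
        assert (EQ : E0 + eps * S0 = E0 + eps * (S0 - exp (a * u (S i))) + eps * exp (a * u (S i))) by ring.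
        rewrite EQ.
        eapply Rle_trans. apply frac_lip; auto. apply Rmult_le_pos; lra. lra.
        right. replace (a * y - a * u (S i)) with (a * (y - u (S i))) by ring. rewrite Rabs_mult, (Rabs_pos_eq a) by lra. auto.
      * unfold Fs. rewrite upd_other by lia.
        rewrite (sum_eq (fun j => exp (a * upd u (S i) y (S j))) (fun j => exp (a * u (S j)))).
        rewrite Rminus_diag, Rabs_R0. apply Rmult_le_pos. lra. apply Rabs_pos.
        intros j Hj. rewrite upd_other by lia. auto.
Qed.

Lemma min_sum X n : (forall j, 0 <= X j) -> Rmin 1 (sum_f_R0 X n) <= sum_f_R0 (fun j => Rmin 1 (X j)) n.
Proof.
  intros H. induction n; simpl. lra.
  assert (H1 := sum_nonneg X n H). specialize (H (S n)).
  assert (Rmin 1 (sum_f_R0 X n + X (S n)) <= Rmin 1 (sum_f_R0 X n) + Rmin 1 (X (S n))).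
  { unfold Rmin. repeat destruct Rle_dec; lra. }
  lra.
Qed.

Lemma Fs_bound1 a d n u : 0 < a -> 0 <= d <= 1 ->
  1 - Fs a n u <= cap ((-a) * u 0%nat + (-(d*a*a))) + sum_f_R0 (fun j => cap (a * u (S j) + (-((1-d)*a*a)))) n.
Proof.
  intros Ha Hd. assert (Hs : 0 <= sum_f_R0 (fun j => cap (a * u (S j) + (-((1-d)*a*a)))) n).
  { apply sum_nonneg. intros; apply cap_bounds. }
  destruct (Fs_bounds a n u) as [F1 F2].
  destruct (Rle_dec 0 (u 0%nat + d*a)) as [Hu|Hu].
  2:{ assert (cap ((-a) * u 0%nat + (-(d*a*a))) = 1).
      { unfold cap. apply Rmin_left. apply exp_ge_1. nra. }
      lra. }
  assert (HC := cap_bounds ((-a) * u 0%nat + (-(d*a*a)))).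
  cut (1 - Fs a n u <= sum_f_R0 (fun j => cap (a * u (S j) + (-((1-d)*a*a)))) n). lra.
  unfold Fs. set (E0 := exp (a * u 0%nat)). set (eps := exp (-(a*a))).
  set (S0 := sum_f_R0 (fun j => exp (a * u (S j))) n).
  assert (HE0 : 0 < E0) by apply exp_pos. assert (He : 0 < eps) by apply exp_pos.
  assert (HS0 : 0 <= S0) by (apply sum_nonneg; intros; apply Rlt_le, exp_pos).
  assert (HT : 0 <= eps * S0) by (apply Rmult_le_pos; lra).
  replace (1 - E0 / (E0 + eps * S0)) with ((eps * S0) / (E0 + eps * S0)) by (field; lra).
  apply Rle_trans with (Rmin 1 (sum_f_R0 (fun j => exp (a * u (S j) + (-((1-d)*a*a)))) n)).
  - apply Rmin_glb.
    + apply Rmult_le_reg_r with (E0 + eps * S0). lra. unfold Rdiv. rewrite Rmult_assoc, Rinv_l by lra. lra.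
    + apply Rle_trans with (eps * S0 / E0).
      * unfold Rdiv. apply Rmult_le_compat_l; auto. apply Rinv_le_contravar; lra.
      * unfold S0. rewrite scal_sum. unfold Rdiv. rewrite Rmult_comm, scal_sum.
        apply sum_Rle. intros j _. 
        replace (exp (a * u (S j)) * eps * / E0) with (exp (a * u (S j) + - (a*a) + - (a * u 0%nat))).
        apply exp_le. nra.
        unfold eps, E0. rewrite !exp_plus, exp_Ropp. repeat rewrite exp_Ropp. field. split; apply Rgt_not_eq, exp_pos.
  - eapply Rle_trans. apply min_sum. intros; apply Rlt_le, exp_pos.
    right. reflexivity.
Qed.

Lemma prod_one F n : (forall j, (j <= n)%nat -> F j = 1) -> prod_f_R0 F n = 1.
Proof. intros H. induction n; simpl. apply H; lia. rewrite IHn, H; try lia. ring. intros; apply H; lia. Qed.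

Definition hc c (x : R) := 1 - clamp (x + (-c)).

Lemma hc_bounds c x : 0 <= hc c x <= 1.
Proof. unfold hc. destruct (clamp_bounds (x + - c)). lra. Qed.

Lemma Fs_bound2 a n u t c : 0 < a ->
  Fs a n u <= clamp (u 0%nat + (1 - t)) + Ph (hc c) n u + exp (-(a*(c-t) - a*a)).
Proof.
  intros Ha. destruct (Fs_bounds a n u) as [F1 F2].
  assert (HP : 0 <= Ph (hc c) n u) by (apply prod_SO_pos; intros; apply hc_bounds).
  assert (HC := clamp_bounds (u 0%nat + (1 - t))). assert (HE := exp_pos (-(a*(c-t) - a*a))).
  destruct (Rle_dec t (u 0%nat)) as [Ht|Ht].
  { rewrite clamp_ge1 by lra. lra. }
  destruct (classic (forall j, (j <= n)%nat -> u (S j) <= c)) as [Hall|Hex].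
  { assert (Ph (hc c) n u = 1). { apply prod_one. intros j Hj. unfold hc. rewrite clamp_le0. ring.
      specialize (Hall j Hj). lra. }
    lra. }
  apply not_all_ex_not in Hex. destruct Hex as [j Hj].
  apply imply_to_and in Hj. destruct Hj as [Hj Hc].
  cut (Fs a n u <= exp (-(a*(c-t) - a*a))). lra.
  unfold Fs. set (E0 := exp (a * u 0%nat)). set (eps := exp (-(a*a))).
  set (S0 := sum_f_R0 (fun j => exp (a * u (S j))) n).
  assert (HE0 : 0 < E0) by apply exp_pos. assert (He : 0 < eps) by apply exp_pos.
  assert (Hj0 : exp (a * u (S j)) <= S0) by (apply (term_le_sum (fun j => exp (a * u (S j)))); auto; intros; apply Rlt_le, exp_pos).
  assert (Hej := exp_pos (a * u (S j))).
  apply Rle_trans with (E0 / (eps * exp (a * u (S j)))).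
  - unfold Rdiv. apply Rmult_le_compat_l. lra. apply Rinv_le_contravar. nra. nra.
  - replace (E0 / (eps * exp (a * u (S j)))) with (exp (a * u 0%nat + (a*a) + - (a * u (S j)))).
    apply exp_le. nra.
    unfold eps, E0. rewrite !exp_plus. repeat rewrite exp_Ropp. field. split; apply Rgt_not_eq, exp_pos.
Qed.

Lemma Good_ext f g : (forall u, f u = g u) -> Good f -> Good g.
Proof. intros H G. replace g with f; auto. apply functional_extensionality; auto. Qed.

Lemma Good1_ext f g : (forall u, f u = g u) -> Good1 f -> Good1 g.
Proof. intros H G. replace g with f; auto. apply functional_extensionality; auto. Qed.

Lemma Good_minus f g : Good f -> Good g -> Good (fun u => f u - g u).
Proof.
  intros Gf Gg. apply (Good_ext (fun u => f u + (-1) * g u)). intros; ring.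
  apply Good_plus; auto. apply Good_scal; auto.
Qed.

Lemma gexp_one_minus k f : Good f -> gexp k (fun u => 1 - f u) = 1 - gexp k f.
Proof.
  intros Gf. rewrite (gexp_ext _ _ (fun u => (fun _ => 1) u + (fun u => -1 * f u) u)) by (intros; ring).
  rewrite gexp_plus, gexp_const, gexp_scal; auto. ring. apply Good_const. apply Good_scal; auto.
Qed.

Lemma case1_bound a n d : 0 < a -> 0 <= d <= 1 ->
  0 <= 1 - gexp (n+2) (Fs a n) <= exp (-(d*a*(d*a))/2) + INR (S n) * exp (-((1-d)*a*((1-d)*a))/2).
Proof.
  intros Ha Hd. assert (GF := Good_Fs a n Ha).
  set (psi := fun x => cap ((-a) * x + (-(d*a*a)))).
  set (phi := fun x => cap (a * x + (-((1-d)*a*a)))).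
  assert (Gpsi : Good1 psi) by apply Good1_cap. assert (Gphi : Good1 phi) by apply Good1_cap.
  split.
  - assert (gexp (n+2) (Fs a n) <= gexp (n+2) (fun _ => 1)).
    { apply gexp_mono; auto. apply Good_const. intros; apply Fs_bounds. }
    rewrite gexp_const in H. lra.
  - rewrite <- gexp_one_minus by auto.
    eapply Rle_trans. apply (gexp_mono _ _ (fun u => psi (u 0%nat) + sum_f_R0 (fun j => phi (u (S j))) n)).
    + apply Good_minus. apply Good_const. auto.
    + apply Good_plus. apply Good_coord; auto. apply (Good_sum n (fun j u => phi (u (S j)))). intros; apply Good_coord; auto.
    + intros u. apply Fs_bound1; auto.
    + rewrite (gexp_plus _ (fun u => psi (u 0%nat)) (fun u => sum_f_R0 (fun j => phi (u (S j))) n)).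
      2: apply Good_coord; auto. 2: apply (Good_sum n (fun j u => phi (u (S j)))); intros; apply Good_coord; auto.
      rewrite (gexp_coord _ 0 psi) by (auto; lia).
      rewrite (gexp_sum _ n (fun j u => phi (u (S j)))) by (intros; apply Good_coord; auto).
      rewrite (sum_eq _ (fun _ => J phi)) by (intros; apply gexp_coord; auto; lia).
      rewrite sum_cte. apply Rplus_le_compat.
      * replace (-(d*a*(d*a))/2) with ((-(d*a))*(-(d*a))/2 - (-(d*a))*(-(d*a))) by field.
        apply mgf_bound; auto. intros x. unfold psi.
        replace ((-a) * x + (-(d*a*a))) with (a * (-(x + d*a))) by ring.
        replace (-(d*a) * (x - -(d*a))) with ((d*a) * (-(x + d*a))) by ring.
        apply cap_le_exp. nra.
      * rewrite Rmult_comm. apply Rmult_le_compat_l. apply pos_INR.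
        replace (-((1-d)*a*((1-d)*a))/2) with (((1-d)*a)*((1-d)*a)/2 - ((1-d)*a)*((1-d)*a)) by field.
        apply mgf_bound; auto. intros x. unfold phi.
        replace (a * x + (-((1-d)*a*a))) with (a * (x - (1-d)*a)) by ring.
        apply cap_le_exp. nra.
Qed.

Lemma exp_pow_INR x k : exp x ^ k = exp (x * INR k).
Proof.
  induction k. simpl. rewrite Rmult_0_r, exp_0. auto.
  rewrite S_INR. simpl. rewrite IHk. rewrite <- exp_plus. f_equal. ring.
Qed.

Lemma Good1_hc c : Good1 (hc c).
Proof.
  apply (Good1_ext (fun x => 1 + (-1) * clamp (x + -c))). intros; unfold hc; ring.
  apply Good1_plus. apply Good1_const. apply Good1_scal, Good1_clamp.
Qed.

Lemma J_hc_bounds c : 0 <= c -> 0 <= J (hc c) <= 1 - gauss_density (c+2).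
Proof.
  intros Hc. split.
  - rewrite <- (J_const 0). apply J_le. apply Good1_const. apply Good1_hc. intros; apply hc_bounds.
  - rewrite (J_ext _ (fun x => 1 + (-1) * clamp (x + -c))) by (intros; unfold hc; ring).
    rewrite J_plus, J_const, J_scal. 2: apply Good1_clamp. 2: apply Good1_const. 2: apply Good1_scal, Good1_clamp.
    replace (c+2) with ((c+1)+1) by ring.
    assert (gauss_density (c + 1 + 1) <= J (fun x => clamp (x + - c))).
    { apply J_lower. apply Good1_clamp. lra. intros; apply clamp_bounds. intros x Hx. rewrite clamp_ge1; lra. }
    lra.
Qed.

Lemma case2_bound a n t c : 0 < a -> 1 <= t -> 0 <= c ->
  0 <= gexp (n+2) (Fs a n) <= exp (-((t-1)*(t-1))/2) + exp (-(gauss_density (c+2) * INR (S n))) + exp (-(a*(c-t) - a*a)).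
Proof.
  intros Ha Ht Hc. assert (GF := Good_Fs a n Ha).
  set (psi := fun x => clamp (x + (1 - t))).
  assert (Gpsi : Good1 psi) by apply Good1_clamp.
  assert (GP : Good (Ph (hc c) n)) by (apply Good_Ph, Good1_hc).
  split.
  - rewrite <- (gexp_const (n+2) 0). apply gexp_mono; auto. apply Good_const. intros; apply Rlt_le, Fs_bounds.
  - eapply Rle_trans. apply (gexp_mono _ _ (fun u => (psi (u 0%nat) + Ph (hc c) n u) + exp (-(a*(c-t) - a*a)))); auto.
    + apply Good_plus. apply Good_plus; auto. apply Good_coord; auto. apply Good_const.
    + intros u. apply Fs_bound2; auto.
    + rewrite gexp_plus, gexp_plus, gexp_const. 2: apply Good_coord; auto. 2: auto.
      2: apply Good_plus; auto; apply Good_coord; auto. 2: apply Good_const.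
      rewrite (gexp_coord _ 0 psi) by (auto; lia).
      replace (n+2)%nat with (S (S n)) by lia. rewrite gexp_Ph by apply Good1_hc.
      apply Rplus_le_compat_r. apply Rplus_le_compat.
      * replace (-((t-1)*(t-1))/2) with ((t-1)*(t-1)/2 - (t-1)*(t-1)) by field.
        apply mgf_bound; auto. intros x. unfold psi.
        destruct (Rle_dec (x + (1 - t)) 0).
        rewrite clamp_le0 by auto. apply Rlt_le, exp_pos.
        apply Rle_trans with 1. apply clamp_bounds. apply exp_ge_1. nra.
      * destruct (J_hc_bounds c Hc) as [B1 B2].
        set (p := gauss_density (c+2)) in *.
        rewrite Ropp_mult_distr_l, <- exp_pow_INR. apply pow_incr. split; auto.
        assert (H := exp_ineq1_le (-p)). lra.
Qed.

Definition LL (n : nat) := ln (INR (n + 2)).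

Lemma INR_n2 n : INR (n+2) = INR n + 2.
Proof. rewrite plus_INR. simpl. ring. Qed.

Lemma LL_pos n : 0 < LL n.
Proof.
  unfold LL. rewrite <- ln_1. apply ln_increasing. lra. rewrite INR_n2. assert (H := pos_INR n). lra.
Qed.

Lemma exp_LL n : exp (LL n) = INR n + 2.
Proof. unfold LL. rewrite exp_ln. apply INR_n2. rewrite INR_n2. assert (H := pos_INR n). lra. Qed.

Lemma LL_div : diverges LL.
Proof.
  intros B. destruct (archimed (exp B)) as [H1 _].
  assert (0 <= IZR (up (exp B))) by (assert (H:=exp_pos B); lra).
  destruct (IZN (up (exp B))) as [k Hk]. apply le_IZR; lra.
  exists k. intros n Hn. apply le_INR in Hn. rewrite Hk, <- INR_IZR_INZ in H1.
  destruct (Rle_dec B (LL n)) as [|Hc]; auto. exfalso.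
  assert (exp (LL n) < exp B) by (apply exp_increasing; lra). rewrite exp_LL in H0. lra.
Qed.

Lemma div_lin y al be : diverges y -> 0 < al -> diverges (fun n => al * y n + be).
Proof.
  intros Hy Ha B. destruct (Hy ((B - be)/al)) as [N HN]. exists N. intros n Hn. specialize (HN n Hn).
  apply Rmult_le_compat_l with (r := al) in HN; [|lra]. replace (al * ((B - be)/al)) with (B - be) in HN by (field; lra). lra.
Qed.

Lemma div_ge y z : diverges y -> (exists N0, forall n, (N0 <= n)%nat -> y n <= z n) -> diverges z.
Proof.
  intros Hy [N0 H] B. destruct (Hy B) as [N HN]. exists (max N N0). intros n Hn.
  specialize (HN n ltac:(lia)). specialize (H n ltac:(lia)). lra.
Qed.

Lemma cv_shift_one u : Un_cv (fun n => u n - 1) 0 -> Un_cv u 1.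
Proof.
  intros H eps He. destruct (H eps He) as [N HN]. exists N. intros n Hn. specialize (HN n Hn).
  unfold R_dist in *. rewrite Rminus_0_r in HN. auto.
Qed.

Lemma cv_sum3 u v w : Un_cv u 0 -> Un_cv v 0 -> Un_cv w 0 -> Un_cv (fun n => u n + v n + w n) 0.
Proof.
  intros. replace 0 with (0 + 0 + 0) by ring. apply CV_plus; auto. apply CV_plus; auto.
Qed.

Lemma tau_pos Rate q n : 0 < Rate -> 0 < q -> 0 < tauM Rate q (n+2).
Proof.
  intros. unfold tauM. fold (LL n). assert (H1 := LL_pos n). apply Rdiv_lt_0_compat; auto. nra.
Qed.

Lemma a_props Rate q n : 0 < Rate -> 0 < q ->
  0 < / sqrt (tauM Rate q (n+2)) /\ / sqrt (tauM Rate q (n+2)) * / sqrt (tauM Rate q (n+2)) = q / Rate * LL n.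
Proof.
  intros HR Hq. assert (Ht := tau_pos Rate q n HR Hq). assert (Hs := sqrt_lt_R0 _ Ht).
  split. apply Rinv_0_lt_compat; auto.
  rewrite <- Rinv_mult. rewrite sqrt_sqrt by lra. unfold tauM. fold (LL n).
  assert (H1 := LL_pos n). field. split; lra.
Qed.

Lemma calE_eq Rate q n : 0 < Rate -> 0 < q ->
  calE (n+2) (tauM Rate q (n+2)) = gexp (n+2) (Fs (/ sqrt (tauM Rate q (n+2))) n).
Proof. intros. unfold calE. rewrite sparc_eq; auto. apply tau_pos; auto. Qed.

Lemma cv_exp_lin al : 0 < al -> Un_cv (fun n => exp (-(al * LL n))) 0.
Proof.
  intros Ha. apply (cv_exp_neg (fun n => al * LL n)). eapply div_ge. apply (div_lin LL al 0 LL_div Ha).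
  exists 0%nat. intros; lra.
Qed.

Theorem case1 Rate q : 0 < Rate -> 0 < q -> q > 2 * Rate ->
  Un_cv (fun n : nat => calE (n + 2) (tauM Rate q (n + 2))) 1.
Proof.
  intros HR Hq Hk. set (k := q / Rate).
  assert (Hk2 : 2 < k). { unfold k. apply Rmult_lt_reg_r with Rate; auto. unfold Rdiv. rewrite Rmult_assoc, Rinv_l; lra. }
  set (eta := k - 2). set (d := eta / (4 * k)).
  assert (Hd : 0 <= d <= 1). { unfold d, eta. split. apply Rle_mult_inv_pos; lra.
    apply Rmult_le_reg_r with (4*k). lra. unfold Rdiv. rewrite Rmult_assoc, Rinv_l by lra. lra. }
  assert (Hdk : d * k = eta / 4) by (unfold d; field; lra).
  apply cv_shift_one.
  apply squeeze0 with (v := fun n => exp (-((d*d*k/2) * LL n)) + exp (-((eta/4) * LL n))).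
  2:{ replace 0 with (0 + 0) by ring. apply CV_plus; apply cv_exp_lin.
      assert (0 < d) by (unfold d, eta; apply Rdiv_lt_0_compat; lra). nra. unfold eta; lra. }
  exists 0%nat. intros n _.
  rewrite calE_eq by auto. destruct (a_props Rate q n HR Hq) as [Ha Ha2]. fold k in Ha2.
  set (a := / sqrt (tauM Rate q (n+2))) in *.
  destruct (case1_bound a n d Ha Hd) as [B1 B2].
  rewrite Rabs_left1 by lra.
  assert (HL := LL_pos n).
  assert (E1 : -(d*a*(d*a))/2 = -((d*d*k/2) * LL n)).
  { replace (d*a*(d*a)) with (d*d*(a*a)) by ring. rewrite Ha2. field. }
  rewrite E1 in B2.
  assert (E2 : INR (S n) * exp (-((1-d)*a*((1-d)*a))/2) <= exp (-((eta/4) * LL n))).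
  { apply Rle_trans with (exp (LL n) * exp (-((1-d)*a*((1-d)*a))/2)).
    - apply Rmult_le_compat_r. apply Rlt_le, exp_pos. rewrite exp_LL, S_INR. lra.
    - rewrite <- exp_plus. apply exp_le.
      replace ((1-d)*a*((1-d)*a)) with ((1-d)*(1-d)*(a*a)) by ring. rewrite Ha2.
      assert ((1-d)*(1-d)*k/2 >= 1 + eta/4) by (unfold eta in *; nra).
      nra. }
  lra.
Qed.

Theorem case2 Rate q : 0 < Rate -> 0 < q -> q < 2 * Rate ->
  Un_cv (fun n : nat => calE (n + 2) (tauM Rate q (n + 2))) 0.
Proof.
  intros HR Hq Hk. set (k := q / Rate).
  assert (Hk2 : k < 2). { unfold k. apply Rmult_lt_reg_r with Rate; auto. unfold Rdiv. rewrite Rmult_assoc, Rinv_l; lra. }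
  assert (Hk0 : 0 < k) by (unfold k; apply Rdiv_lt_0_compat; auto).
  set (rho := (k+2)/(2*k)).
  assert (Hrho : 1 < rho). { unfold rho. apply Rmult_lt_reg_r with (2*k). lra. unfold Rdiv. rewrite Rmult_assoc, Rinv_l; lra. }
  set (gam := sqrt rho).
  assert (Hg2 : gam * gam = rho) by (apply sqrt_sqrt; lra).
  assert (Hg0 : 0 <= gam) by apply sqrt_pos.
  assert (Hg1 : 1 < gam) by nra.
  set (ep := (gam - 1)/2). assert (Hep : 0 < ep) by (unfold ep; lra).
  set (ze := (2-k)/(2*(k+2))). assert (Hze : 0 < ze) by (unfold ze; apply Rdiv_lt_0_compat; lra).
  set (K0 := 2*(1+1/ze)).
  set (g := (2-k)/8). assert (Hgp : 0 < g) by (unfold g; lra).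
  set (K1 := exp (-K0) / (2 * sqrt (2*PI))).
  assert (HK1 : 0 < K1) by (unfold K1; apply Rdiv_lt_0_compat; [apply exp_pos| assert (H:=sqrt2PI_pos); lra]).
  assert (Hrk : (1+ze)*rho*k = (k+6)/4) by (unfold ze, rho; field; lra).
  set (A := fun n => / sqrt (tauM Rate q (n+2))).
  assert (HA : forall n, 0 < A n /\ A n * A n = k * LL n).
  { intros n. destruct (a_props Rate q n HR Hq) as [H1 H2]. split; [exact H1|exact H2]. }
  apply squeeze0 with (v := fun n => exp (-((ep * A n - 1)*(ep * A n - 1))/2)
       + exp (-(gauss_density (gam * A n + 2) * INR (S n))) + exp (-(A n * (gam * A n - ep * A n) - A n * A n))).
  - destruct (LL_div (1/(ep*ep*k))) as [N HN]. exists N. intros n Hn. specialize (HN n Hn).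
    destruct (HA n) as [Ha Ha2].
    assert (Ht : 1 <= ep * A n).
    { assert (1 <= ep*ep*(A n * A n)).
      { rewrite Ha2. apply Rmult_le_reg_r with (/ (ep*ep*k)). apply Rinv_0_lt_compat. 
        apply Rmult_lt_0_compat; auto. apply Rmult_lt_0_compat; auto.
        replace (ep * ep * (k * LL n) * / (ep * ep * k)) with (LL n) by (field; split; lra). lra. }
      assert (0 <= ep * A n) by nra. nra. }
    assert (Hc : 0 <= gam * A n) by nra.
    destruct (case2_bound (A n) n (ep * A n) (gam * A n) Ha Ht Hc) as [B1 B2].
    rewrite calE_eq by auto. fold (A n). rewrite Rabs_pos_eq by auto. exact B2.
  - apply cv_sum3.
    + apply (Un_cv_ext (fun n => exp (-((ep*A n - 1)*(ep*A n - 1)/2)))). intros; f_equal; field.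
      apply (cv_exp_neg (fun n => (ep * A n - 1)*(ep * A n - 1)/2)).
      apply div_ge with (y := fun n => (ep*ep*k/4) * LL n + (-1/2)). apply div_lin. apply LL_div.
      assert (0 < ep*ep) by nra. apply Rdiv_lt_0_compat; [apply Rmult_lt_0_compat; auto| lra].
      exists 0%nat. intros n _. destruct (HA n) as [Ha Ha2].
      replace ((ep*ep*k/4) * LL n) with (ep*ep*(k * LL n)/4) by field. rewrite <- Ha2.
      assert (H0 := Rle_0_sqr (ep * A n - 2)). unfold Rsqr in H0. replace (ep * ep * (A n * A n)) with ((ep * A n) * (ep * A n)) by ring. set (x := ep * A n) in *. lra.
    + apply (cv_exp_neg (fun n => gauss_density (gam * A n + 2) * INR (S n))).
      apply div_ge with (y := fun n => (K1 * g) * LL n + K1). apply div_lin. apply LL_div. nra.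
      exists 0%nat. intros n _. destruct (HA n) as [Ha Ha2].
      set (c := gam * A n). assert (Hc2 : c * c = rho * k * LL n) by (unfold c; replace (gam * A n * (gam * A n)) with ((gam*gam)*(A n * A n)) by ring; rewrite Hg2, Ha2; ring).
      assert (Hsq : (c+2)*(c+2) <= (1+ze)*(c*c) + 4*(1+1/ze)).
      { assert (H : 0 <= ze*((c - 2/ze)*(c - 2/ze))) by (apply Rmult_le_pos; [lra| apply Rle_0_sqr]).
        replace (ze*((c - 2/ze)*(c - 2/ze))) with (ze*(c*c) - 4*c + 4/ze) in H by (field; lra).
        replace (4*(1+1/ze)) with (4 + 4/ze) by (field; lra).
        replace ((c+2)*(c+2)) with (c*c + 4*c + 4) by ring.
        replace ((1+ze)*(c*c)) with (c*c + ze*(c*c)) by ring. lra. }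
      assert (HL := LL_pos n).
      assert (Hexp : exp (-((k+6)/8 * LL n) - K0) <= exp (- (c+2)^2/2)).
      { apply exp_le. rewrite Hc2 in Hsq. unfold K0.
        replace ((1+ze)*(rho*k*LL n)) with ((k+6)/4 * LL n) in Hsq by (rewrite <- Hrk; ring).
        simpl. lra. }
      assert (HS : exp (LL n) / 2 <= INR (S n)) by (rewrite exp_LL, S_INR; assert (H:=pos_INR n); lra).
      unfold gauss_density.
      apply Rle_trans with (exp (-((k+6)/8 * LL n) - K0) / sqrt (2*PI) * (exp (LL n)/2)).
      * replace (exp (-((k+6)/8 * LL n) - K0) / sqrt (2*PI) * (exp (LL n)/2)) with (K1 * exp (g * LL n)).
        2:{ assert (E : exp (-((k+6)/8 * LL n) - K0) * exp (LL n) = exp (g * LL n) * exp (-K0)).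
            { rewrite <- !exp_plus. f_equal. unfold g. field. }
            assert (H:=sqrt2PI_pos).
            transitivity ((exp (-((k+6)/8 * LL n) - K0) * exp (LL n)) / (2 * sqrt (2*PI))).
            rewrite E. unfold K1. field. lra. field. lra. }
        unfold g. assert (H := exp_ineq1_le ((2-k)/8 * LL n)). nra.
      * assert (H := sqrt2PI_pos). apply Rmult_le_compat.
        apply Rlt_le, Rdiv_lt_0_compat. apply exp_pos. auto.
        apply Rlt_le, Rdiv_lt_0_compat. apply exp_pos. lra.
        unfold Rdiv. apply Rmult_le_compat_r. apply Rlt_le, Rinv_0_lt_compat; auto. auto. auto.
    + apply (cv_exp_neg (fun n => A n * (gam * A n - ep * A n) - A n * A n)).
      apply div_ge with (y := fun n => ((gam - ep - 1) * k) * LL n + 0). apply div_lin. apply LL_div.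
      apply Rmult_lt_0_compat; auto. unfold ep; lra.
      exists 0%nat. intros n _. destruct (HA n) as [Ha Ha2].
      replace (A n * (gam * A n - ep * A n) - A n * A n) with ((gam - ep - 1) * (A n * A n)) by ring.
      rewrite Ha2. lra.
Qed.

Theorem mainTheorem7 (Rate q : R) (hR : 0 < Rate) (hq : 0 < q) :
  (q > 2 * Rate ->
     Un_cv (fun n : nat => calE (n + 2) (tauM Rate q (n + 2))) 1) /\
  (q < 2 * Rate ->
     Un_cv (fun n : nat => calE (n + 2) (tauM Rate q (n + 2))) 0).
Proof. split; intros. apply case1; auto. apply case2; auto. Qed.
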